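(* Let $d\ge 1$ and let $(D,\mathbf{m},E)\in\mathbb{R}\times\mathbb{R}^d\times\mathbb{R}$ satisfy $D>0$ and $E-\sqrt{D^2+|\mathbf{m}|^2}>0$. For $h>1$ define $T(h)=\frac{3h-8}{24}+\frac{\sqrt{(3h+8)^2-96}}{24}$, and for $\Pi\ge E$ define $h(\Pi)=\sqrt{\Pi^2-|\mathbf{m}|^2}/D$ and $S(\Pi)=\Pi^2-\Pi E-D^2 h(\Pi)T(h(\Pi))$. Let $\Pi_*$ denote the unique real root of $S$ in $(E,\infty)$. Then for any $\Pi_r\in[E,\Pi_* )$, the Newton–Raphson iterate \[ \Pi_{r+1}=\Pi_r-\frac{S(\Pi_r)}{S'(\Pi_r)} \] satisfies $\Pi_{r+1}>\Pi_r$.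
   Context: This is the Newton–Raphson iteration (started from $\Pi_0=E$) used to recover primitive variables from conservative variables $(D,\mathbf{m},E)$ (relativistic density, momentum density, energy density) for the relativistic hydrodynamics equations with the equation of state $h=\frac{2(6p^2+4p\rho+\rho^2)}{\rho(3p+2\rho)}$, for which $p=\rho T(h)$ and $\Pi=E+p$. For $\Pi\ge E$ one has $h(\Pi)>1$, and $S$ has exactly one real root in $(E,\infty)$. *)

(* Defs.v *)
From Stdlib Require Import Reals List.
From Coquelicot Require Import Coquelicot.
Open Scope R_scope.

(* Squared Euclidean norm |m|^2 of a vector m in R^d, represented as a list of length d. *)
Definition norm2 (m : list R) : R := fold_right (fun x acc => x ^ 2 + acc) 0 m.

Definition Tfun (h : R) : R := (3 * h - 8) / 24 + sqrt ((3 * h + 8) ^ 2 - 96) / 24.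

Definition hfun (D : R) (m : list R) (Pi : R) : R := sqrt (Pi ^ 2 - norm2 m) / D.

Definition Sfun (D : R) (m : list R) (E : R) (Pi : R) : R :=
  Pi ^ 2 - Pi * E - D ^ 2 * hfun D m Pi * Tfun (hfun D m Pi).

(* Main.v *)
Require Import Defs.
From Stdlib Require Import Reals List Lra Psatz.
From Coquelicot Require Import Coquelicot.
Open Scope R_scope.

Lemma norm2_ge0 m : 0 <= norm2 m.
Proof. induction m; simpl; nra. Qed.

Lemma key D m E x : 0 < D -> D^2 + norm2 m < x^2 -> E <= x -> 0 < x ->
  exists l, is_derive (Sfun D m E) x l /\ 0 < l.
Proof.
intros HD Hx HE Hx0. set (M := norm2 m) in *.
assert (HM := norm2_ge0 m). fold M in HM.
set (u := sqrt (x^2 - M)).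
assert (Hu2 : u * u = x^2 - M) by (apply sqrt_sqrt; nra).
assert (Hu0 : 0 <= u) by apply sqrt_pos.
assert (HuD : D < u) by nra.
set (h := u / D).
assert (Hh : 1 < h) by (unfold h; apply (Rmult_lt_reg_r D); [lra|]; field_simplify; lra).
set (s := sqrt ((3*h+8)^2 - 96)).
assert (Hs2 : s * s = (3*h+8)^2 - 96) by (apply sqrt_sqrt; nra).
assert (Hs0 : 0 <= s) by apply sqrt_pos.
assert (Hs : 3*h+2 <= s) by nra.
eexists. split.
- unfold Sfun, hfun, Tfun. auto_derive.
  + fold M. replace (x * (x * 1) + - M) with (x^2 - M) by ring. fold u.
    replace (u * / D) with h by (unfold h; field; lra).
    repeat split; nra.
  + reflexivity.
- fold M. replace (x * (x * 1) + - M) with (x^2 - M) by ring. fold u.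
  replace (u * / D) with h by (unfold h; field; lra).
  replace ((3 * h + 8) * ((3 * h + 8) * 1) + - (96)) with ((3 * h + 8) ^ 2 - 96) by ring.
  fold s.
  assert (Hdu : 0 < u) by lra.
  assert (Hsp : 0 < s) by lra.
  match goal with |- 0 < ?l =>
    replace l with (2*x - E - x * ((6*h - 8)*s + s*s + 3*h*(3*h+8)) / (24 * h * s)) end.
  2:{ unfold h. field. lra. }
  assert (Hk : (6*h - 8)*s + s*s + 3*h*(3*h+8) < 24*h*s) by nra.
  assert (0 < 24*h*s) by nra.
  assert (x * ((6*h - 8)*s + s*s + 3*h*(3*h+8)) / (24 * h * s) < x).
  { apply (Rmult_lt_reg_r (24*h*s)); auto. field_simplify; try lra. nra. }
  lra.
Qed.

Theorem lemma2 (d : nat) (D : R) (m : list R) (E : R) (Pstar Pr : R) :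
  (1 <= d)%nat -> length m = d ->
  0 < D -> E - sqrt (D ^ 2 + norm2 m) > 0 ->
  (* Pstar is the unique real root of S in (E, +oo) *)
  E < Pstar -> Sfun D m E Pstar = 0 ->
  (forall x, E < x -> Sfun D m E x = 0 -> x = Pstar) ->
  E <= Pr -> Pr < Pstar ->
  Pr - Sfun D m E Pr / Derive (Sfun D m E) Pr > Pr.
Proof.
intros _ _ HD HE0 HEs HS _ HPr HPs.
assert (HM := norm2_ge0 m).
assert (Hq := sqrt_sqrt (D^2 + norm2 m) ltac:(nra)).
assert (Hq0 := sqrt_pos (D^2 + norm2 m)).
assert (HE2 : D^2 + norm2 m < E^2) by nra.
assert (K : forall x, E <= x -> is_derive (Sfun D m E) x (Derive (Sfun D m E) x) /\ 0 < Derive (Sfun D m E) x).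
{ intros x Hx. destruct (key D m E x HD ltac:(nra) Hx ltac:(nra)) as [l [Hl Hl0]].
  rewrite (is_derive_unique _ _ _ Hl). auto. }
destruct (MVT_gen (Sfun D m E) Pr Pstar (Derive (Sfun D m E))) as [c [Hc Hc2]].
- intros x Hx. rewrite Rmin_left in Hx by lra. apply K; lra.
- intros x Hx. rewrite Rmin_left in Hx by lra. rewrite Rmax_right in Hx by lra.
  apply continuity_pt_filterlim.
  assert (Hex : ex_derive (Sfun D m E) x) by (eexists; apply (proj1 (K x ltac:(lra)))).
  exact (ex_derive_continuous (Sfun D m E) x Hex).
- rewrite Rmin_left in Hc by lra. rewrite Rmax_right in Hc by lra.
  destruct (K c ltac:(lra)) as [_ Hc0].
  destruct (K Pr ltac:(lra)) as [_ Hp0].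
  assert (Hneg : Sfun D m E Pr < 0) by (rewrite HS in Hc2; nra).
  assert (Sfun D m E Pr / Derive (Sfun D m E) Pr < 0).
  { unfold Rdiv. assert (0 < / Derive (Sfun D m E) Pr) by (apply Rinv_0_lt_compat; lra). nra. }
  lra.
Qed.
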